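(* Let $F$ be a field of characteristic $0$, $V$ an $n$-dimensional $F$-vector space, $G\le\mathrm{GL}(V)$ a finite group generated by pseudo-reflections, and $M$ an $r$-dimensional $F[G]$-module. For all $1\le i,j\le r$ there is $L_{ij}\in\mathrm{S}(V)^G$ such that, as operators on $\mathrm{S}(V^* )\otimes\wedge M^*$, \[ d_i^*\delta_j^*+\delta_j^*d_i^*=\partial_{L_{ij}}. \]
   Context: $G$ acts contragrediently on $V^*,M^*$ and diagonally on tensor products of symmetric algebras $\mathrm{S}(\cdot)$ and exterior algebras $\wedge(\cdot)$. $(\mathrm{S}(V)\otimes M^* )^G$ is a free $\mathrm{S}(V)^G$-module with homogeneous basis $\tilde\omega_1^{M^*},\dots,\tilde\omega_r^{M^*}$, and $(\mathrm{S}(V)\otimes M)^G$ is a free $\mathrm{S}(V)^G$-module with homogeneous basis $\tilde\omega_1^{M},\dots,\tilde\omega_r^{M}$. For $s\in\mathrm{S}(V)$, $\partial_s$ is the constant-coefficient differential operator on $\mathrm{S}(V^* )$ ($\partial_v$ for $v\in V$ is the derivation with $\partial_v\lambda=\lambda(v)$ for $\lambda\in V^*$, extended multiplicatively in $s$), acting on $\mathrm{S}(V^* )\otimes\wedge M^*$ as $\partial_s\otimes\mathrm{id}$. For $\mu\in M^*$, $\epsilon_\mu$ is left exterior multiplication on $\wedge M^*$; for $m\in M$, $\iota_m$ is the interior product, the anti-derivation of $\wedge M^*$ with $\iota_m(\xi)=\xi(m)$ for $\xi\in M^*$. If $\tilde\omega_i^{M^*}=\sum_k s_k\otimes\mu_k$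 then $d_i^*=\sum_k\partial_{s_k}\otimes\epsilon_{\mu_k}$; if $\tilde\omega_j^{M}=\sum_k t_k\otimes m_k$ then $\delta_j^*=\sum_k\partial_{t_k}\otimes\iota_{m_k}$. *)

(* Defs.v *)
From HB Require Import structures.
From mathcomp Require Import all_boot all_order all_algebra all_fingroup.
From mathcomp Require Import mxrepresentation.
From mathcomp Require Import mpoly.
Set Implicit Arguments. Unset Strict Implicit. Unset Printing Implicit Defensive.
Import GRing.Theory.
Local Open Scope ring_scope.

(* Coordinates: V = 'rV[F]_n with standard basis e_1..e_n; G acts on V
   through a faithful matrix representation rV (v |-> v *m rV g).
   S(V)   = {mpoly F[n]}, variable 'X_i standing for e_i.
   S(V-dual) = {mpoly F[n]}, variable 'X_i standing for the dual coordinate x_i.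
   M = 'rV[F]_r with basis e_1..e_r, G acting by m |-> m *m rM g;
   M-dual = 'rV[F]_r with dual basis, G acting contragrediently by
   xi |-> xi *m (rM g^-1)^T.
   S(V) (x) M and S(V) (x) M-dual are represented by 'rV[{mpoly F[n]}]_r
   (coefficients along the basis of M, resp. the dual basis of M-dual).
   S(V-dual) (x) /\M-dual is represented by functions {set 'I_r} -> {mpoly F[n]}
   (coefficient of e*_S = e*_{s_1} /\ ... /\ e*_{s_k}, s_1 < ... < s_k). *)

Section Defs.
Variables (F : fieldType) (n r : nat).
Local Notation P := {mpoly F[n]}.

Definition mx_act_poly (A : 'M[F]_n) (p : P) : P :=
  p \mPo [tuple \sum_(j < n) A i j *: 'X_j | i < n].

Definition homog_of (d : nat) (p : P) : bool :=
  all [pred m | mdeg m == d] (msupp p).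

Definition dop (s : P) (p : P) : P :=
  \sum_(m <- msupp s) s@_m *: mderivm m p.

Definition ExtT := {set 'I_r} -> P.

Definition ext_sign (T : {set 'I_r}) (k : 'I_r) : P :=
  (-1) ^+ #|[set j in T | (j < k)%N]|.

(* left exterior multiplication by the k-th dual basis vector e*_k *)
Definition eps_k (k : 'I_r) (x : ExtT) : ExtT := fun T =>
  if k \in T then ext_sign T k * x (T :\ k) else 0.

(* interior product by the k-th basis vector e_k of M *)
Definition iota_k (k : 'I_r) (x : ExtT) : ExtT := fun T =>
  if k \in T then 0 else ext_sign T k * x (k |: T).

Definition dop_ext (s : P) (x : ExtT) : ExtT := fun T => dop s (x T).

Definition ext_add (x y : ExtT) : ExtT := fun T => x T + y T.

(* d-dual for omega = sum_k w_k (x) e*_k  :  sum_k partial_{w_k} (x) eps_{e*_k} *)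
Definition dstar (w : 'rV[P]_r) (x : ExtT) : ExtT := fun T =>
  \sum_(k < r) eps_k k (dop_ext (w 0 k) x) T.

(* delta-dual for omega = sum_k w_k (x) e_k : sum_k partial_{w_k} (x) iota_{e_k} *)
Definition deltastar (w : 'rV[P]_r) (x : ExtT) : ExtT := fun T =>
  \sum_(k < r) iota_k k (dop_ext (w 0 k) x) T.

End Defs.

Section Inv.
Variables (F : fieldType) (n r : nat) (gT : finGroupType) (G : {group gT}).
Variables (rV : mx_representation F G n) (rM : mx_representation F G r).
Local Notation P := {mpoly F[n]}.

Definition invariant_poly (p : P) : Prop :=
  forall g, g \in G -> mx_act_poly (rV g) p = p.

Definition act_SM (g : gT) (w : 'rV[P]_r) : 'rV[P]_r :=
  map_mx (mx_act_poly (rV g)) w *m map_mx (fun a => a%:MP) (rM g).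

Definition act_SMd (g : gT) (w : 'rV[P]_r) : 'rV[P]_r :=
  map_mx (mx_act_poly (rV g)) w *m map_mx (fun a => a%:MP) (rM g^-1)%g^T.

Definition invariant_SM (w : 'rV[P]_r) : Prop := forall g, g \in G -> act_SM g w = w.
Definition invariant_SMd (w : 'rV[P]_r) : Prop := forall g, g \in G -> act_SMd g w = w.

Definition homog_inv_basis (inv : 'rV[P]_r -> Prop) (om : 'I_r -> 'rV[P]_r) : Prop :=
  [/\ forall i, inv (om i),
      forall i, exists d, forall k, homog_of d (om i 0 k),
      forall w, inv w -> exists f : 'I_r -> P,
          (forall i, invariant_poly (f i)) /\ w = \sum_(i < r) f i *: om i
    & forall f : 'I_r -> P, (forall i, invariant_poly (f i)) ->
          \sum_(i < r) f i *: om i = 0 -> forall i, f i = 0].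

Definition pseudo_reflection (g : gT) : bool := \rank (rV g - 1%:M) == 1%N.

End Inv.

(* Main.v *)
Require Import Defs.
From HB Require Import structures.
From mathcomp Require Import all_boot all_order all_algebra all_fingroup.
From mathcomp Require Import mxrepresentation.
From mathcomp Require Import mpoly.
From Stdlib Require Import FunctionalExtensionality.
Set Implicit Arguments. Unset Strict Implicit.
Import GRing.Theory.
Local Open Scope ring_scope.
From mathcomp Require Import zify.
Section DopLemmas.
Variables (F : fieldType) (n : nat).
Local Notation P := {mpoly F[n]}.
Implicit Types (s t p q : P).

Lemma dop_seq s p (S : seq 'X_{1..n}) : uniq S -> {subset msupp s <= S} ->
  dop s p = \sum_(m <- S) s@_m *: mderivm m p.
Proof.
move=> uS sub; rewrite /dop.
rewrite [RHS](bigID (fun m => m \in msupp s)) /= [X in _ + X]big1 ?addr0; last first.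
  by move=> m /memN_msupp_eq0 ->; rewrite scale0r.
rewrite -[RHS]big_filter; apply: perm_big; apply: uniq_perm.
- exact: msupp_uniq.
- exact: filter_uniq.

by move=> m; rewrite mem_filter; case: (boolP (m \in msupp s)) => // /sub ->.
Qed.

Lemma dop_addl s t p : dop (s + t) p = dop s p + dop t p.
Proof.
set S := undup (msupp s ++ msupp t).
have uS : uniq S by rewrite undup_uniq.
rewrite (@dop_seq (s + t) p S) // ?(@dop_seq s p S) ?(@dop_seq t p S) //.
- by rewrite -big_split; apply: eq_bigr => m _; rewrite mcoeffD scalerDl.
- by move=> m mt; rewrite mem_undup mem_cat mt orbT.
- by move=> m ms; rewrite mem_undup mem_cat ms.
by move=> m /msuppD_le; rewrite mem_undup.
Qed.

Lemma dop_scalel c s p : dop (c *: s) p = c *: dop s p.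
Proof.
rewrite (@dop_seq (c *: s) p (msupp s)) ?msupp_uniq //; last exact: msuppZ_le.
by rewrite /dop scaler_sumr; apply: eq_bigr => m _; rewrite mcoeffZ scalerA.
Qed.

Lemma dop0l p : dop 0 p = 0.
Proof. by rewrite /dop msupp0 big_nil. Qed.

Lemma dop_suml (I : Type) (r : seq I) (f : I -> P) p :
  dop (\sum_(i <- r) f i) p = \sum_(i <- r) dop (f i) p.
Proof.
by apply: (big_morph (fun s => dop s p)); [move=> ??; apply: dop_addl| apply: dop0l].
Qed.

Lemma dopX m p : dop 'X_[m] p = mderivm m p.
Proof. by rewrite /dop msuppX big_seq1 mcoeffX eqxx scale1r. Qed.

Lemma dop_addr s p q : dop s (p + q) = dop s p + dop s q.
Proof. by rewrite /dop -big_split; apply: eq_bigr => m _; rewrite mderivmD scalerDr. Qed.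

Lemma dop0r s : dop s 0 = 0.
Proof. by rewrite /dop big1 // => m _; rewrite raddf0 scaler0. Qed.

Lemma dop_oppr s p : dop s (- p) = - dop s p.
Proof. by rewrite /dop -sumrN; apply: eq_bigr => m _; rewrite mderivmN scalerN. Qed.

Lemma dop_scaler s c p : dop s (c *: p) = c *: dop s p.
Proof. by rewrite /dop scaler_sumr; apply: eq_bigr => m _; rewrite mderivmZ !scalerA mulrC. Qed.

Lemma dop_sumr (I : Type) (r : seq I) (f : I -> P) s :
  dop s (\sum_(i <- r) f i) = \sum_(i <- r) dop s (f i).
Proof.
by apply: (big_morph (dop s)); [move=> ??; apply: dop_addr| apply: dop0r].
Qed.

Lemma dop_sign s c p : dop s ((-1) ^+ c * p) = (-1) ^+ c * dop s p.
Proof.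
elim: c => [|c IH]; first by rewrite !expr0 !mul1r.
by rewrite exprS !mulN1r !mulNr dop_oppr IH.
Qed.

Lemma dopM s t p : dop (s * t) p = dop s (dop t p).
Proof.
rewrite mpolyME dop_suml big_allpairs.
rewrite {2}/dop; apply: eq_bigr => m1 _.
rewrite {2}/dop raddf_sum /= scaler_sumr; apply: eq_bigr => m2 _ /=.
rewrite dop_scalel dopX mderivmZ scalerA addmC mderivmDm.
done.
Qed.

Lemma dopC s t p : dop s (dop t p) = dop t (dop s p).
Proof. by rewrite -!dopM mulrC. Qed.

End DopLemmas.
Section Signs.
Variable r : nat.
Definition cnt (T : {set 'I_r}) (k : 'I_r) := #|[set j in T | (j < k)%N]|.

Lemma cnt_D1 (T : {set 'I_r}) (k l : 'I_r) : k \in T -> cnt T l = ((k < l)%N + cnt (T :\ k) l)%N.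
Proof.
move=> kT.
have E : [set j in T :\ k | (j < l)%N] = [set j in T | (j < l)%N] :\ k.
  by apply/setP => j; rewrite !inE andbA.
by rewrite /cnt E [in LHS](cardsD1 k) inE kT.
Qed.

Lemma cnt_U1 (T : {set 'I_r}) (k l : 'I_r) : l \notin T -> cnt (l |: T) k = ((l < k)%N + cnt T k)%N.
Proof.
move=> lT.
have E : [set j in T | (j < k)%N] = [set j in l |: T | (j < k)%N] :\ l.
  apply/setP => j; rewrite !inE; case: (eqVneq j l) => [->|] //=.
  by rewrite (negbTE lT).
by rewrite /cnt E [in LHS](cardsD1 l) !inE eqxx.
Qed.

Lemma cnt_selfD1 (T : {set 'I_r}) (k : 'I_r) : cnt (T :\ k) k = cnt T k.
Proof.
rewrite /cnt; apply: eq_card => j; rewrite !inE.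
by case: (eqVneq j k) => [->|]; rewrite ?ltnn ?andbF.
Qed.

Lemma cnt_selfU1 (T : {set 'I_r}) (k : 'I_r) : cnt (k |: T) k = cnt T k.
Proof.
rewrite /cnt; apply: eq_card => j; rewrite !inE.
by case: (eqVneq j k) => [->|]; rewrite ?ltnn ?andbF.
Qed.
End Signs.

Section Main.
Variables (F : fieldType) (n r : nat).
Local Notation P := {mpoly F[n]}.

Lemma sgn_sq c : (-1) ^+ c * (-1) ^+ c = 1 :> P.
Proof. by rewrite -exprD addnn -mul2n exprM sqrrN !expr1n. Qed.

Lemma anticomm (w1 w2 : 'rV[P]_r) (x : ExtT F n r) :
  ext_add (dstar w1 (deltastar w2 x)) (deltastar w2 (dstar w1 x))
  = dop_ext (\sum_(k < r) w1 0 k * w2 0 k) x.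
Proof.
apply: functional_extensionality => T.
rewrite /ext_add /dstar /deltastar /eps_k /iota_k /dop_ext /ext_sign.
rewrite dop_suml; under [RHS]eq_bigr => k _ do rewrite dopM.
pose D k l U := dop (w1 0 k) (dop (w2 0 l) (x U)).
pose sg (U : {set 'I_r}) (k : 'I_r) := (-1) ^+ cnt U k : P.
pose f1 k l := if (k \in T) && (l \notin T :\ k) then
   sg T k * sg (T :\ k) l * D k l (l |: T :\ k) else 0.
pose f2 k l := if (l \notin T) && (k \in l |: T) then
   sg T l * sg (l |: T) k * D k l ((l |: T) :\ k) else 0.
have -> : \sum_(k < r) (if k \in T then (-1) ^+ #|[set j in T | (j < k)%N]| *
     dop (w1 0 k) (\sum_(k0 < r) (if k0 \in T :\ k then 0
        else (-1) ^+ #|[set j in T :\ k | (j < k0)%N]| * dop (w2 0 k0) (x (k0 |: T :\ k))))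
     else 0) = \sum_(k < r) \sum_(l < r) f1 k l.
  apply: eq_bigr => k _; rewrite /f1; case: (k \in T) => /=; last by rewrite big1.
  rewrite dop_sumr mulr_sumr; apply: eq_bigr => l _.
  case: (l \in T :\ k) => /=; first by rewrite dop0r mulr0.
  by rewrite dop_sign mulrA.
have -> : \sum_(k < r) (if k \in T then 0 else (-1) ^+ #|[set j in T | (j < k)%N]| *
     dop (w2 0 k) (\sum_(k0 < r) (if k0 \in k |: T then
        (-1) ^+ #|[set j in k |: T | (j < k0)%N]| * dop (w1 0 k0) (x ((k |: T) :\ k0))
        else 0))) = \sum_(l < r) \sum_(k < r) f2 k l.
  apply: eq_bigr => l _; rewrite /f2; case: (l \in T) => /=; first by rewrite big1.
  rewrite dop_sumr mulr_sumr; apply: eq_bigr => k _.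
  case: (k \in l |: T) => /=; last by rewrite dop0r mulr0.
  by rewrite dop_sign mulrA /D dopC.
rewrite [X in _ + X]exchange_big -big_split /=; apply: eq_bigr => k _.
rewrite -big_split /= (bigD1 k) //= big1 ?addr0; last first.
  move=> l lk; rewrite /f1 /f2.
  have kl : (k == l) = false by rewrite eq_sym (negbTE lk).
  case kT: (k \in T) => /=; last first.
    by rewrite !inE kl kT /= andbF add0r.
  rewrite !inE kl kT lk /= andbT.
  case lT: (l \in T) => /=; first by rewrite addr0.
  have -> : (l |: T) :\ k = l |: T :\ k.
    by apply/setP => j; rewrite !inE; case: (eqVneq j k) => [->|_]; rewrite ?kl.
  rewrite -mulrDl /sg.
  rewrite (cnt_D1 l kT) (cnt_U1 k (negbT lT)) -!exprD.
  have h : ((k < l)%N + (l < k)%N = 1)%N.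
    have nkl : (val k != val l) by rewrite val_eqE kl.
    by move: nkl; case: ltngtP.
  move: (cnt T k) (cnt (T :\ k) l) ((k < l)%N) ((l < k)%N) h => a b c d h.
  have -> : ((c + b) + (d + a) = (a + b).+1)%N by lia.
  by rewrite exprS mulN1r addrN mul0r.
rewrite /f1 /f2 !inE eqxx /=.
case kT: (k \in T) => /=.
  rewrite setD1K // /sg cnt_selfD1 sgn_sq mul1r addr0 /D; done.
rewrite setU1K ?kT // /sg cnt_selfU1 sgn_sq mul1r add0r /D; done.
Qed.
End Main.
Section InvL.
Variables (F : fieldType) (n r : nat) (gT : finGroupType) (G : {group gT}).
Variables (rV : mx_representation F G n) (rM : mx_representation F G r).
Local Notation P := {mpoly F[n]}.

Lemma inv_pairing (w1 w2 : 'rV[P]_r) :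
  invariant_SMd rV rM w1 -> invariant_SM rV rM w2 ->
  invariant_poly rV (\sum_(k < r) w1 0 k * w2 0 k).
Proof.
move=> H1 H2 g gG.
have H1g := H1 g gG; have H2g := H2 g gG.
rewrite /act_SMd in H1g; rewrite /act_SM in H2g.
pose lq := [tuple \sum_(j < n) rV g i j *: ('X_j : P) | i < n].
have Ephi : forall w : 'rV[P]_r, map_mx (mx_act_poly (rV g)) w = map_mx (comp_mpoly lq) w by [].
have Ec : forall A : 'M[F]_r, map_mx (fun a => a%:MP) A = map_mx (@mpolyC n F) A :> 'M[P]_r by [].
rewrite Ephi Ec in H1g; rewrite Ephi Ec in H2g.
have EL : forall w w' : 'rV[P]_r, \sum_(k < r) w 0 k * w' 0 k = (w *m w'^T) 0 0.
  by move=> w w'; rewrite !mxE; apply: eq_bigr => k _; rewrite mxE.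
rewrite EL.
have -> : mx_act_poly (rV g) ((w1 *m w2^T) 0 0) = map_mx (comp_mpoly lq) (w1 *m w2^T) 0 0.
  by rewrite [RHS]mxE.
have CC : map_mx (@mpolyC n F) (rM g^-1)%g^T *m (map_mx (@mpolyC n F) (rM g))^T = 1%:M.
  by rewrite map_trmx -map_mxM -trmx_mul -repr_mxM ?groupV // mulgV repr_mx1 trmx1 map_mx1.
have E : map_mx (comp_mpoly lq) (w1 *m w2^T) = w1 *m w2^T.
  rewrite map_mxM -map_trmx; symmetry.
  rewrite -{1}H1g -{1}H2g trmx_mul mulmxA -(mulmxA (map_mx (comp_mpoly lq) w1)) CC mulmx1.
  done.
by rewrite E.
Qed.
End InvL.

Theorem lemma5p5 (F : fieldType) (n r : nat) (gT : finGroupType) (G : {group gT})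
    (rV : mx_representation F G n) (rM : mx_representation F G r)
    (omMd omM : 'I_r -> 'rV[{mpoly F[n]}]_r) :
  [pchar F] =i pred0 ->
  mx_faithful rV ->
  G :=: <<[set g in G | pseudo_reflection rV g]>>%g ->
  homog_inv_basis rV (invariant_SMd rV rM) omMd ->
  homog_inv_basis rV (invariant_SM rV rM) omM ->
  forall i j : 'I_r, exists L : {mpoly F[n]},
    invariant_poly rV L /\
    forall x : ExtT F n r,
      ext_add (dstar (omMd i) (deltastar (omM j) x))
              (deltastar (omM j) (dstar (omMd i) x)) = dop_ext L x.
Proof.
move=> _ _ _ [Hd _ _ _] [Hm _ _ _] i j.
exists (\sum_(k < r) omMd i 0 k * omM j 0 k); split.
  exact: inv_pairing.
by move=> x; apply: anticomm.
Qed.
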